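(* Let $X_1,X_2$ be forests and $A\subset X=X_1\times X_2$. Let $A_1$ be the set of points $x\in X$ such that $x=y\vee z$ for some $c$-comparable $y,z\in A$, and let $A_2$ be the set of $t=(t_1,t_2)\in X$ such that $t_1\le x_1$ and $t_2\le x_2$ for some $x=(x_1,x_2)\in A_1$. Then $A_2$ equals the c.h-envelope $\widehat A$ of $A$.
   Context: A partially ordered set $Y$ is a forest if for every $y_0\in Y$ the set $\{y\ge y_0\}$ is finite and totally ordered. For forests $X_1,\dots,X_n$ and $X=X_1\times\cdots\times X_n$, write $y\le x$ if $y_i\le x_i$ for all $i$. A subset $A\subset X$ is hereditary if $x\in A$ and $y\le x$ imply $y\in A$. Points $x,y\in X$ are $c$-comparable if for each $i$, $x_i$ and $y_i$ are comparable; then $x\vee y=(\max(x_i,y_i))_i$. $A$ is concave if $x\vee y\in A$ whenever $x,y\in A$ are $c$-comparable. The c.h-envelope $\widehat A$ of $A$ is the smallest concave hereditary subset of $X$ containing $A$. *)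

(* Defs.v *)
From HB Require Import structures.
From mathcomp Require Import all_boot all_order.
Set Implicit Arguments. Unset Strict Implicit. Unset Printing Implicit Defensive.
Import Order.TTheory.
Local Open Scope order_scope.

Definition is_forest (d : Order.disp_t) (Y : porderType d) : Prop :=
  forall y0 : Y,
    (exists s : seq Y, forall y : Y, (y0 <= y) <-> (y \in s)) /\
    (forall y z : Y, y0 <= y -> y0 <= z -> (y <= z) \/ (z <= y)).

Section Prod2.
Context (d1 d2 : Order.disp_t) (X1 : porderType d1) (X2 : porderType d2).

Definition ple (y x : X1 * X2) : Prop := (y.1 <= x.1) /\ (y.2 <= x.2).

Definition hereditary (A : X1 * X2 -> Prop) : Prop :=
  forall x y, A x -> ple y x -> A y.

Definition c_comparable (x y : X1 * X2) : Prop :=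
  (x.1 >=< y.1) /\ (x.2 >=< y.2).

(* x \/ y = (max(x_i, y_i))_i, meaningful for c-comparable x, y *)
Definition cjoin (x y : X1 * X2) : X1 * X2 :=
  (Order.max x.1 y.1, Order.max x.2 y.2).

Definition concave (A : X1 * X2 -> Prop) : Prop :=
  forall x y, A x -> A y -> c_comparable x y -> A (cjoin x y).

Definition ch_envelope (A : X1 * X2 -> Prop) : X1 * X2 -> Prop :=
  fun x => forall B : X1 * X2 -> Prop,
    concave B -> hereditary B -> (forall a, A a -> B a) -> B x.

Definition A1_of (A : X1 * X2 -> Prop) : X1 * X2 -> Prop :=
  fun x => exists y z, A y /\ A z /\ c_comparable y z /\ x = cjoin y z.

Definition A2_of (A : X1 * X2 -> Prop) : X1 * X2 -> Prop :=
  fun t => exists x, A1_of A x /\ ple t x.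

End Prod2.

(* Main.v *)
Require Import Defs.
From mathcomp Require Import all_boot all_order.
Import Order.TTheory.
Local Open Scope order_scope.

Section Aux.
Context {d1 d2 : Order.disp_t} {X1 : porderType d1} {X2 : porderType d2}.
Implicit Types (A : X1 * X2 -> Prop).

Lemma cmp_cases {d} {T : porderType d} {x y : T} : x >=< y -> x <= y \/ y <= x.
Proof. by case/orP; [left|right]. Qed.

Lemma L1 {A x} : A1_of A x -> exists a, A a /\ a.1 = x.1 /\ a.2 <= x.2.
Proof.
move=> [y [z [Ay [Az [[c1 c2] ->]]]]].
rewrite /cjoin /=.
case: (cmp_cases c1) => h1; case: (cmp_cases c2) => h2.
- exists z; split=> //; by rewrite max_r // max_r.
- exists z; split=> //; by rewrite max_r // max_l.
- exists y; split=> //; by rewrite max_l // max_r.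
- exists y; split=> //; by rewrite max_l // max_l.
Qed.

Lemma L2 {A x} : A1_of A x -> exists b, A b /\ b.1 <= x.1 /\ b.2 = x.2.
Proof.
move=> [y [z [Ay [Az [[c1 c2] ->]]]]].
rewrite /cjoin /=.
case: (cmp_cases c1) => h1; case: (cmp_cases c2) => h2.
- exists z; split=> //; by rewrite max_r // max_r.
- exists y; split=> //; by rewrite max_r // max_l.
- exists z; split=> //; by rewrite max_l // max_r.
- exists y; split=> //; by rewrite max_l // max_l.
Qed.

Lemma LM (HX1 : is_forest X1) (HX2 : is_forest X2) {A x x' s1 s2 u1 u2} :
  A1_of A x -> A1_of A x' ->
  u1 <= s1 -> u1 <= x'.1 -> s1 <= x.1 ->
  u2 <= x.2 -> u2 <= s2 -> s2 <= x'.2 ->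
  exists w, A1_of A w /\ s1 <= w.1 /\ s2 <= w.2.
Proof.
move=> Ax Ax' h1 h2 h3 h4 h5 h6.
have hu1 : u1 <= x.1 by apply: le_trans h3.
case: ((HX1 u1).2 _ _ hu1 h2) => c1.
  by exists x'; split=> //; split=> //; apply: le_trans c1.
have hu2 : u2 <= x'.2 by apply: le_trans h6.
case: ((HX2 u2).2 _ _ h4 hu2) => c2; last first.
  by exists x; split=> //; split=> //; apply: le_trans c2.
case: (L1 Ax) => a [Aa [ea1 ea2]].
case: (L2 Ax') => b [Ab [eb1 eb2]].
have ab1 : b.1 <= a.1 by rewrite ea1; apply: le_trans c1.
have ab2 : a.2 <= b.2 by rewrite eb2; apply: le_trans c2.
exists (cjoin a b); split.
  exists a, b; split=> //; split=> //; split=> //.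
  by split; apply/orP; [right|left].
by rewrite /cjoin /= max_l // max_r // ea1 eb2.
Qed.

End Aux.

Theorem mainTheorem3 (d1 d2 : Order.disp_t)
  (X1 : porderType d1) (X2 : porderType d2)
  (HX1 : is_forest X1) (HX2 : is_forest X2)
  (A : X1 * X2 -> Prop) :
  forall t : X1 * X2, A2_of A t <-> ch_envelope A t.
Proof.
move=> t; split.
  move=> [x [[y [z [Ay [Az [cyz ->]]]]] ht]] B cB hB AB.
  apply: (hB _ _ _ ht); apply: cB; auto.
apply; last first.
- move=> a Aa; exists a; split; last by split.
  exists a, a; split=> //; split=> //; split.
    by split; apply: comparablexx.
  by case: a {Aa} => a1 a2; rewrite /cjoin /= !maxxx.
- move=> x y [x' [Ax' [h1 h2]]] hyx.
  exists x'; split=> //; case: hyx => h3 h4; split; apply: le_trans; eauto.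
- move=> p q [x [Ax [hp1 hp2]]] [x' [Ax' [hq1 hq2]]] [c1 c2].
  rewrite /A2_of /ple /cjoin /=.
  case: (cmp_cases c1) => e1; case: (cmp_cases c2) => e2.
  + exists x'; rewrite max_r // max_r //.
  + rewrite max_r // max_l //.
    have [w [Aw [w1 w2]]] := LM HX1 HX2 Ax' Ax e1 hp1 hq1 hq2 e2 hp2.
    by exists w.
  + rewrite max_l // max_r //.
    have [w [Aw [w1 w2]]] := LM HX1 HX2 Ax Ax' e1 hq1 hp1 hp2 e2 hq2.
    by exists w.
  + exists x; rewrite max_l // max_l //.
Qed.
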